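(* The language $\mathcal{L}(\boxdot)$ is less expressive than $\mathcal{L}(\boxplus)$ on each of the following classes: the class of all bimodal models, the class of serial bimodal models, the class of transitive bimodal models, and the class of Euclidean bimodal models. That is, on each such class $\mathbb{C}$: (i) for every $\phi\in\mathcal{L}(\boxdot)$ there is $\psi\in\mathcal{L}(\boxplus)$ with $\mathcal{M},s\vDash\phi \iff \mathcal{M},s\vDash\psi$ for all $\mathcal{M}\in\mathbb{C}$ and all states $s$ of $\mathcal{M}$; and (ii) the converse fails: there is $\psi\in\mathcal{L}(\boxplus)$ such that no $\phi\in\mathcal{L}(\boxdot)$ is equivalent to $\psi$ on all pointed models from $\mathbb{C}$.
   Context: Fix a nonempty set $\mathbf{P}$ of propositional variables. A bimodal model is $\mathcal{M}=\langle S,R_1,R_2,V\rangle$ with $S$ a nonempty set, $R_1,R_2\subseteq S\times S$, and $V:\mathbf{P}\to\mathcal{P}(S)$; a bimodal frame is such a tuple without $V$. For a property $P$ of binary relations (seriality, reflexivity, transitivity, symmetry, Euclidicity), a bimodal model/frame is called $P$ if both $R_1$ and $R_2$ have $P$. Write $R_i(s)=\{t\mid sR_it\}$. The languages are $\mathcal{L}(\boxdot):\ \phi::=p\mid\neg\phi\mid(\phi\wedge\phi)\mid\boxdot\phi$ and $\mathcal{L}(\boxplus):\ \phi::=p\mid\neg\phi\mid(\phi\wedge\phi)\mid\boxplus\phi$ with $p\in\mathbf{P}$ (other Boolean connectives, $\top,\bot$ are abbreviations). Truth: $\mathcal{M},s\vDash p$ iff $s\in V(p)$; Booleans as usual; $\mathcal{M},s\vDash\boxdot\phi$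 iff for all $t,u$ with $sR_1t$ and $sR_2u$, ($\mathcal{M},t\vDash\phi\iff\mathcal{M},u\vDash\phi$); $\mathcal{M},s\vDash\boxplus\phi$ iff ($\mathcal{M},t\vDash\phi$ for all $t\in R_1(s)$) or ($\mathcal{M},u\vDash\neg\phi$ for all $u\in R_2(s)$). *)

(* Defs.v *)
From Stdlib Require Import Classical.
Set Implicit Arguments.

Section Bimodal.
Variable P : Type.

Inductive formD : Type :=
| VarD : P -> formD
| NegD : formD -> formD
| AndD : formD -> formD -> formD
| BoxDot : formD -> formD.

Inductive formP : Type :=
| VarP : P -> formP
| NegP : formP -> formP
| AndP : formP -> formP -> formP
| BoxPlus : formP -> formP.

Record model : Type := Model {
  state : Type;
  state_inh : inhabited state;
  R1 : state -> state -> Prop;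
  R2 : state -> state -> Prop;
  val : P -> state -> Prop
}.

Fixpoint satD (M : model) (s : state M) (phi : formD) : Prop :=
  match phi with
  | VarD p => val M p s
  | NegD a => ~ satD M s a
  | AndD a b => satD M s a /\ satD M s b
  | BoxDot a => forall t u, R1 M s t -> R2 M s u -> (satD M t a <-> satD M u a)
  end.

Fixpoint satP (M : model) (s : state M) (phi : formP) : Prop :=
  match phi with
  | VarP p => val M p s
  | NegP a => ~ satP M s a
  | AndP a b => satP M s a /\ satP M s b
  | BoxPlus a => (forall t, R1 M s t -> satP M t a) \/
                 (forall u, R2 M s u -> ~ satP M u a)
  end.

End Bimodal.

Arguments VarD {P}. Arguments VarP {P}.

Definition serial_rel (S : Type) (R : S -> S -> Prop) := forall x, exists y, R x y.
Definition transitive_rel (S : Type) (R : S -> S -> Prop) :=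
  forall x y z, R x y -> R y z -> R x z.
Definition euclidean_rel (S : Type) (R : S -> S -> Prop) :=
  forall x y z, R x y -> R x z -> R y z.

Inductive model_class : Type := AllModels | SerialModels | TransitiveModels | EuclideanModels.

Definition in_class {P : Type} (c : model_class) (M : model P) : Prop :=
  match c with
  | AllModels => True
  | SerialModels => serial_rel (R1 M) /\ serial_rel (R2 M)
  | TransitiveModels => transitive_rel (R1 M) /\ transitive_rel (R2 M)
  | EuclideanModels => euclidean_rel (R1 M) /\ euclidean_rel (R2 M)
  end.

Definition equiv_on {P : Type} (c : model_class) (phi : formD P) (psi : formP P) : Prop :=
  forall (M : model P) (s : state M), in_class c M -> (satD M s phi <-> satP M s psi).

(* Main.v *)
Require Import Defs.
From Stdlib Require Import Classical.

Fixpoint tr {P : Type} (phi : formD P) : formP P :=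
  match phi with
  | VarD p => VarP p
  | NegD a => NegP (tr a)
  | AndD a b => AndP (tr a) (tr b)
  | BoxDot a => AndP (BoxPlus (tr a)) (BoxPlus (NegP (tr a)))
  end.

Lemma tr_ok {P : Type} (phi : formD P) : forall (M : model P) s,
  satD M s phi <-> satP M s (tr phi).
Proof.
  induction phi as [p|a IH|a IHa b IHb|a IH]; intros M s; simpl.
  - tauto.
  - rewrite IH; tauto.
  - rewrite IHa, IHb; tauto.
  - split.
    + intros H. split.
      * destruct (classic (forall t, R1 M s t -> satP M t (tr a))) as [H1|H1]; [left; exact H1|right].
        apply not_all_ex_not in H1. destruct H1 as [t Ht].
        intros u Hu Hsu. apply Ht. intros Hst. apply (proj1 (IH M t)). apply (proj2 (H t u Hst Hu)). apply (proj2 (IH M u)); exact Hsu.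
      * destruct (classic (forall t, R1 M s t -> ~ satP M t (tr a))) as [H1|H1]; [left; exact H1|right].
        apply not_all_ex_not in H1. destruct H1 as [t Ht].
        intros u Hu Hsu. apply Ht. intros Hst Hta. apply Hsu.
        apply (proj2 (IH M t)) in Hta. apply (proj1 (H t u Hst Hu)) in Hta. apply (proj1 (IH M u)) in Hta. exact Hta.
    + intros [[H1|H1] [H2|H2]] t u Ht Hu; rewrite (IH M t), (IH M u).
      * pose proof (H1 t Ht). pose proof (H2 t Ht). contradiction.
      * pose proof (H1 t Ht). pose proof (H2 u Hu). tauto.
      * pose proof (H1 u Hu). pose proof (H2 t Ht). tauto.
      * pose proof (H1 u Hu). pose proof (H2 u Hu). tauto.
Qed.

Definition swap {P : Type} (M : model P) : model P :=
  @Model P (state M) (state_inh M) (R2 M) (R1 M) (val M).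

Lemma swap_ok {P : Type} (phi : formD P) : forall (M : model P) (s : state M),
  satD M s phi <-> satD (swap M) s phi.
Proof.
  induction phi as [p|a IH|a IHa b IHb|a IH]; intros M s; simpl.
  - tauto.
  - rewrite IH; tauto.
  - rewrite IHa, IHb; tauto.
  - split; intros H t u Ht Hu.
    + rewrite <- (IH M t), <- (IH M u). symmetry. apply H; assumption.
    + rewrite (IH M t), (IH M u). symmetry. apply H; assumption.
Qed.

Definition M0 (P : Type) : model P :=
  @Model P bool (inhabits true) (fun _ t => t = true) (fun _ t => t = false) (fun _ s => s = true).

Lemma M0_class {P : Type} (c : model_class) : in_class c (M0 P) /\ in_class c (swap (M0 P)).
Proof.
  destruct c; simpl; unfold serial_rel, transitive_rel, euclidean_rel; simpl;
    repeat split; intros; try congruence; eauto.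
Qed.

Theorem proposition3p2 :
  forall (P : Type), inhabited P ->
  forall c : model_class,
    (forall phi : formD P, exists psi : formP P, equiv_on c phi psi) /\
    (exists psi : formP P, forall phi : formD P, ~ equiv_on c phi psi).
Proof.
  intros P [p] c. split.
  - intros phi. exists (tr phi). intros M s _. apply tr_ok.
  - exists (BoxPlus (VarP p)). intros phi H.
    destruct (@M0_class P c) as [C1 C2].
    pose proof (H (M0 P) true C1) as E1.
    pose proof (H (swap (M0 P)) true C2) as E2.
    rewrite <- swap_ok in E2.
    assert (A : satP (M0 P) true (BoxPlus (VarP p))) by (simpl; left; auto).
    assert (B : ~ satP (swap (M0 P)) true (BoxPlus (VarP p))).
    { simpl. intros [Hb|Hb]. - specialize (Hb false eq_refl). discriminate.
      - apply (Hb true eq_refl). reflexivity. }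
    apply B. apply E2. apply E1. exact A.
Qed.
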